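(* There exists a language which is accepted by a GRLOWJFA but not by any ROWJFA, and hence ROWJ ⊂ GRLOWJ (proper inclusion).
   Context: A right one-way jumping finite automaton (ROWJFA) is a tuple A = (Σ, Q, q_0, F, R) with alphabet Σ, finite state set Q, start state q_0, final states F ⊆ Q, and rules R ⊆ Q × Σ × Q such that for each p ∈ Q and a ∈ Σ there is at most one q with (p,a,q) ∈ R. For p ∈ Q let Σ_p = {b ∈ Σ : (p,b,q) ∈ R for some q}. Configurations are strings in QΣ^*; for (p,a,q) ∈ R, x ∈ (Σ \ Σ_p)^* and y ∈ Σ^*, the automaton moves from pxay to qyx. The accepted language is the set of words w with q_0 w ⇒^* q_f for some q_f ∈ F. A generalized right linear one-way jumping finite automaton (GRLOWJFA) is a tuple A = (Σ, Q, q_0, F, R) where R ⊂ Q × Σ^+ × Q is finite and for each p ∈ Q and w ∈ Σ^+ there is at most one q with (p,w,q) ∈ R (rule (p,w,q): from p, delete w, go to q). For p ∈ Q let Σ_p = {w ∈ Σ^+ : (p,w,q) ∈ R for some q}. Configurations are strings in Σ^* Q Σ^*, and the moves are: (1) for t,u,v ∈ Σ^* and (p,x,q) ∈ R, tpuxv ⇒ tuqv, provided u contains no word of Σ_p as a subword and there is no nonempty suffix u_2 of u and nonempty prefix x_1 of x with u_2x_1 = x; (2) for x ∈ Σ^+ and y ∈ Σ^* such that y contains no word of Σ_p as a subword, xpy ⇒ pxy. The accepted language is {w ∈ Σ^* : q_0 w ⇒^* q_f for some q_f ∈ F}. ROWJ and GRLOWJ denote the classes of languages accepted by ROWJFA and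 GRLOWJFA respectively. A ROWJFA is exactly a GRLOWJFA all of whose rules delete words of length 1, so ROWJ ⊆ GRLOWJ. *)

(* Defs.v *)
From mathcomp Require Import all_boot.
From Stdlib Require Import Relation_Operators.
Set Implicit Arguments. Unset Strict Implicit. Unset Printing Implicit Defensive.

Definition language (S : finType) := seq S -> Prop.

(* The rule set R is encoded by the partial function [rdelta]:
   (p,a,q) \in R  <->  rdelta p a = Some q   (determinism built in). *)
Record rowjfa (S : finType) := ROWJFA {
  rQ : finType;
  rq0 : rQ;
  rF : pred rQ;
  rdelta : rQ -> S -> option rQ
}.

Definition rSigma (S : finType) (A : rowjfa S) (p : rQ A) : pred S :=
  fun b => rdelta p b != None.

Definition rconfig (S : finType) (A : rowjfa S) := (rQ A * seq S)%type.

Inductive rstep (S : finType) (A : rowjfa S) : rconfig A -> rconfig A -> Prop :=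
| RStep (p q : rQ A) (a : S) (x y : seq S) :
    rdelta p a = Some q ->
    all (fun b => ~~ rSigma p b) x ->
    rstep (p, x ++ a :: y) (q, y ++ x).

Definition raccepts (S : finType) (A : rowjfa S) (w : seq S) : Prop :=
  exists2 qf : rQ A, @rF S A qf &
    clos_refl_trans _ (@rstep S A) (@rq0 S A, w) (qf, [::]).

Definition ROWJ (S : finType) (L : language S) : Prop :=
  exists A : rowjfa S, forall w, L w <-> raccepts A w.

Record grlowjfa (S : finType) := GRLOWJFA {
  gQ : finType;
  gq0 : gQ;
  gF : pred gQ;
  gR : seq (gQ * seq S * gQ);
  gR_nonempty : forall p w q, (p, w, q) \in gR -> w != [::];
  gR_det : forall p w q1 q2, (p, w, q1) \in gR -> (p, w, q2) \in gR -> q1 = q2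
}.

Definition gSigma (S : finType) (A : grlowjfa S) (p : gQ A) (w : seq S) : Prop :=
  exists q, (p, w, q) \in @gR S A.

Definition no_Sigma_subword (S : finType) (A : grlowjfa S) (p : gQ A) (u : seq S)
  : Prop := forall w, gSigma p w -> ~~ infix w u.

(* Configurations t p v in S^* Q S^*, encoded as (t, p, v). *)
Definition gconfig (S : finType) (A : grlowjfa S) := (seq S * gQ A * seq S)%type.

Inductive gstep (S : finType) (A : grlowjfa S) : gconfig A -> gconfig A -> Prop :=
| GStep1 (t u x v : seq S) (p q : gQ A) :
    (p, x, q) \in @gR S A ->
    no_Sigma_subword p u ->
    ~ (exists u2 x1, u2 != [::] /\ x1 != [::] /\ suffix u2 u /\ prefix x1 x
                      /\ u2 ++ x1 = x) ->
    gstep (t, p, u ++ x ++ v) (t ++ u, q, v)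
| GStep2 (x y : seq S) (p : gQ A) :
    x != [::] ->
    no_Sigma_subword p y ->
    gstep (x, p, y) ([::], p, x ++ y).

Definition gaccepts (S : finType) (A : grlowjfa S) (w : seq S) : Prop :=
  exists2 qf : gQ A, @gF S A qf &
    clos_refl_trans _ (@gstep S A) ([::], @gq0 S A, w) ([::], qf, [::]).

Definition GRLOWJ (S : finType) (L : language S) : Prop :=
  exists A : grlowjfa S, forall w, L w <-> gaccepts A w.

(* Main.v *)
From Stdlib Require Import Relation_Operators Operators_Properties Classical_Prop.
Require Import Defs.
From mathcomp Require Import all_boot zify.
Set Implicit Arguments. Unset Strict Implicit. Unset Printing Implicit Defensive.

Lemma split_cat (T : Type) (v t x y : seq T) (a : T) :
  v ++ t = x ++ a :: y ->
  (exists y1, v = x ++ a :: y1 /\ y = y1 ++ t) \/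
  (exists x2, x = v ++ x2 /\ t = x2 ++ a :: y).
Proof.
elim: v x => [|c v IH] x.
  by rewrite cat0s => ->; right; exists x.
case: x => [|d x] /=.
  by case=> -> <-; left; exists v.
case=> -> /IH [[y1 [-> ->]]|[x2 [-> ->]]]; [left; exists y1|right; exists x2]; by [].
Qed.

Lemma rt1n_inv (T : Type) (R : T -> T -> Prop) c e :
  clos_refl_trans_1n _ R c e -> c = e \/ exists2 d, R c d & clos_refl_trans_1n _ R d e.
Proof. intros H; destruct H as [|y z H1 H2]; [left; reflexivity | right; exists y; assumption]. Qed.

Section P1.
Variables (S : finType) (A : rowjfa S).

Definition gR1 : seq (rQ A * seq S * rQ A) :=
  [seq (z.1.1, [:: z.1.2], z.2) | z <- enum {: (rQ A * S) * rQ A}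
     & rdelta z.1.1 z.1.2 == Some z.2].

Lemma gR1P p w q : (p, w, q) \in gR1 <-> exists a, w = [:: a] /\ rdelta p a = Some q.
Proof.
split.
  case/mapP=> [[[p' a] q']]; rewrite mem_filter /= => /andP[/eqP E _] [-> -> ->].
  by exists a.
case=> a [-> E]; apply/mapP; exists ((p, a), q) => //.
by rewrite mem_filter /= E eqxx mem_enum.
Qed.

Lemma gR1_ne p w q : (p, w, q) \in gR1 -> w != [::].
Proof. by case/gR1P=> a [-> _]. Qed.

Lemma gR1_det p w q1 q2 : (p, w, q1) \in gR1 -> (p, w, q2) \in gR1 -> q1 = q2.
Proof.
case/gR1P=> a [-> E1] /gR1P [b [[<-] E2]].
by move: E1; rewrite E2 => [[]].
Qed.

Definition B1 : grlowjfa S := @GRLOWJFA S (rQ A) (rq0 A) (@rF S A) gR1 gR1_ne gR1_det.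

Lemma noSig_all p u : no_Sigma_subword (A:=B1) p u <-> all (fun b => ~~ rSigma p b) u.
Proof.
split.
  move=> H; apply/allP=> b bu; apply/negP=> Hb.
  have : gSigma (A:=B1) p [:: b].
    move: Hb; rewrite /rSigma; case E: (rdelta p b) => [q|] // _.
    by exists q; apply/gR1P; exists b.
  move/H; rewrite /= => /negP; apply.
  by apply/infixP; case/splitPr: bu => u1 u2; exists u1, u2.
move=> /allP H w [q /gR1P [a [-> E]]]; apply/negP=> /infixP [s [s' Eu]].
have : a \in u by rewrite Eu mem_cat mem_head orbT.
by move/H; rewrite /rSigma E.
Qed.

Lemma no_overlap1 (u : seq S) a :
  ~ (exists u2 x1, u2 != [::] /\ x1 != [::] /\ suffix u2 u /\ prefix x1 [:: a]
                      /\ u2 ++ x1 = [:: a]).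
Proof.
case=> u2 [x1 [H1 [H2 [_ [_ E]]]]].
have := congr1 size E; rewrite size_cat /=.
case: u2 H1 {E} => // ? u2 _; case: x1 H2 => // ? x1 _ /=.
by rewrite addnS.
Qed.

Lemma r2g p w qf : clos_refl_trans_1n _ (@rstep S A) (p, w) (qf, [::]) ->
  forall t v, v ++ t = w -> clos_refl_trans _ (@gstep S B1) (t, p, v) ([::], qf, [::]).
Proof.
move=> H; remember (p, w) as c eqn:Ec; remember (qf, [::]) as e eqn:Ee.
revert p w Ec; induction H as [c0|c0 d e' Hs Hr IH]. all: intros p w Ec t v Evt.
  rewrite Ee in Ec; case: Ec => -> Ew; move: Evt; rewrite -Ew.
  by case: v => // ; case: t => // _; apply: rt_refl.
subst c0 w e'.
inversion Hs as [p' q a x y Hd Hx E1 E2].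
subst d p'.
have IH' := IH erefl q (y ++ x) erefl; clear Hr IH.
move: (split_cat (esym H)); clear Hs H; case=> [[y1 [Ev Ey]]|[x2 [Ex Et]]].
  subst v y; apply: rt_trans; last first.
    by apply: (IH' (t ++ x) y1); rewrite catA.
  apply: rt_step; rewrite -cat1s catA -catA.
  apply: (@GStep1 S B1 t x [:: a] y1 p q).
  - by apply/gR1P; exists a.
  - exact/noSig_all.
  - exact: no_overlap1.
rewrite {}Et; rewrite {}Ex in Hx IH' *; apply: rt_trans.
  apply: rt_step; apply: (@GStep2 S B1 (x2 ++ a :: y) v p) => //.
    by case: (x2).
  by apply/noSig_all; move: Hx; rewrite all_cat => /andP[].
apply: rt_trans; last first.
  by apply: (IH' x2 (y ++ v)); rewrite -catA.
apply: rt_step.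
rewrite -catA -cat1s -[x2]cat0s -[[::] ++ x2]/x2.
have := (@GStep1 S B1 [::] x2 [:: a] (y ++ v) p q); rewrite cat0s; apply.
- by apply/gR1P; exists a.
- by apply/noSig_all; move: Hx; rewrite all_cat => /andP[].
- exact: no_overlap1.
Qed.


Lemma g2r qf c : clos_refl_trans_1n _ (@gstep S B1) c ([::], qf, [::]) ->
  clos_refl_trans_1n _ (@rstep S A) (c.1.2, c.2 ++ c.1.1) (qf, [::]).
Proof.
move=> H; remember ([::], qf, [::]) as e eqn:Ee.
induction H as [c0|c0 d e' Hs Hr IH].
  by subst; apply: rt1n_refl.
have IH' := IH Ee; clear IH Hr; subst e'.
case: Hs IH'.
  move=> t u x v p q /gR1P [a [-> Hd]] /noSig_all Hu _ /= IH.
  eapply Relation_Operators.rt1n_trans; last exact IH.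
  rewrite -catA /=.
  have := @RStep S A p q a u (v ++ t) Hd Hu.
  by rewrite -catA.
move=> x y p Hx /noSig_all Hy /= IH.
rewrite cats0 in IH.
case: (rt1n_inv IH) => [E|[e1 Hs Hr]].
  by move: Hx E; case: (x).
inversion Hs as [p' q a x1 y1 Hd Hx1 E1 E2]; subst e1 p'; clear Hs IH.
case: (split_cat (esym H)) => [[y2 [Ex Ey]]|[x3 [Ex Ey]]].
  subst x y1; eapply Relation_Operators.rt1n_trans; last exact Hr.
  rewrite catA; have := @RStep S A p q a (y ++ x1) y2 Hd.
  rewrite all_cat Hy Hx1 /= catA; by apply.
subst y; move: Hy; rewrite all_cat /= /rSigma Hd /=.
by rewrite andbF.
Qed.

End P1.

Lemma part1 (S : finType) (L : language S) : ROWJ L -> GRLOWJ L.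
Proof.
case=> A HA; exists (B1 A) => w; split => [/HA|H]; last (apply/HA; move: H).
  case=> qf Hf /clos_rt_rt1n_iff H; exists qf => //.
  exact: (r2g H (cats0 w)).
case=> qf Hf /clos_rt_rt1n_iff H; exists qf => //.
apply/clos_rt_rt1n_iff; have := g2r H; rewrite /= cats0; by [].
Qed.


Definition ab : seq bool := [:: true; false].
Definition abb : seq bool := [:: true; false; false].
Definition gR2 : seq (option bool * seq bool * option bool) :=
  [:: (None, ab, Some true); (None, abb, Some false);
      (Some true, ab, Some true); (Some false, abb, Some false)].

Lemma gR2P p w q : (p, w, q) \in gR2 ->
  (w = ab /\ q = Some true /\ (p = None \/ p = Some true)) \/
  (w = abb /\ q = Some false /\ (p = None \/ p = Some false)).
Proof.
rewrite !inE => /or4P [] /eqP [-> -> ->]; auto.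
Qed.

Lemma gR2_ne p w q : (p, w, q) \in gR2 -> w != [::].
Proof. by case/gR2P => [[-> _]|[-> _]]. Qed.

Lemma gR2_det p w q1 q2 : (p, w, q1) \in gR2 -> (p, w, q2) \in gR2 -> q1 = q2.
Proof.
by case/gR2P => [[-> [-> _]]|[-> [-> _]]] /gR2P [[E [-> _]]|[E [-> _]]].
Qed.

Definition B2 : grlowjfa bool :=
  @GRLOWJFA bool (option bool) None (fun q => q != None) gR2 gR2_ne gR2_det.

Definition W (i j : nat) : seq bool := nseq i true ++ nseq j false.

Lemma sig2 p w : gSigma (A:=B2) p w -> w = ab \/ w = abb.
Proof. by case=> q /gR2P [[-> _]|[-> _]]; auto. Qed.

Lemma noSig_nseq p k c : no_Sigma_subword (A:=B2) p (nseq k c).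
Proof.
move=> w /sig2 Hw; apply/negP => /mem_infix H.
have : ~~ c \in nseq k c by apply: H; case: Hw => ->; case: (c).
by rewrite mem_nseq; case: (c); rewrite andbF.
Qed.

Lemma no_overlap2 m (u : seq bool) :
  ~ (exists u2 x1, u2 != [::] /\ x1 != [::] /\ suffix u2 u /\
       prefix x1 (true :: nseq m false) /\ u2 ++ x1 = true :: nseq m false).
Proof.
case=> u2 [x1 [H1 [H2 [_ [Hp E]]]]].
case: u2 H1 E => // c u2 _ [_ E].
case: x1 H2 Hp E => // e x1 _ /= /andP [/eqP -> _] E.
have : true \in nseq m false by rewrite -E mem_cat mem_head orbT.
by rewrite mem_nseq andbF.
Qed.

Lemma stepW p q m n k : (p, true :: nseq m false, q) \in gR2 ->
  clos_refl_trans _ (@gstep _ B2) ([::], p, W n.+1 (m + k)) ([::], q, W n k).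
Proof.
move=> Hr.
have E : W n.+1 (m + k) = nseq n true ++ (true :: nseq m false) ++ nseq k false.
  by rewrite /W -addn1 !nseqD -!catA.
rewrite E; apply: rt_trans.
  apply: rt_step; apply: (@GStep1 _ B2 [::] (nseq n true) _ _ p q Hr).
  - exact: noSig_nseq.
  - exact: no_overlap2.
case: n {E} => [|n]; first exact: rt_refl.
apply: rt_step; apply: (@GStep2 _ B2 (nseq n.+1 true) (nseq k false) q) => //.
exact: noSig_nseq.
Qed.

Lemma run_ab n : clos_refl_trans _ (@gstep _ B2) ([::], Some true, W n n) ([::], Some true, [::]).
Proof.
elim: n => [|n IH]; first exact: rt_refl.
apply: rt_trans IH; have := @stepW (Some true) (Some true) 1 n n.
by rewrite add1n; apply.
Qed.

Lemma run_abb n : clos_refl_trans _ (@gstep _ B2) ([::], Some false, W n (n * 2)) ([::], Some false, [::]).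
Proof.
elim: n => [|n IH]; first exact: rt_refl.
apply: rt_trans IH; have := @stepW (Some false) (Some false) 2 n (n * 2).
by rewrite -mulSn; apply.
Qed.

Lemma acc_pos i j : 0 < i -> i = j \/ j = i * 2 -> gaccepts B2 (W i j).
Proof.
case: i => // n _ [<-|->].
  exists (Some true) => //; apply: rt_trans (run_ab n).
  have := @stepW None (Some true) 1 n n; rewrite add1n; apply => //.
exists (Some false) => //; apply: rt_trans (run_abb n).
have := @stepW None (Some false) 2 n (n * 2); rewrite -mulSn; apply => //.
Qed.

Lemma gstep_inv (c d : gconfig B2) : gstep c d ->
  (exists t u x v p q, c = (t, p, u ++ x ++ v) /\ d = (t ++ u, q, v) /\ (p, x, q) \in gR2)
  \/ (exists x y p, c = (x, p, y) /\ d = ([::], p, x ++ y) /\ x != [::]).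
Proof.
case=> [t u x v p q H _ _|x y p H _]; [left; exists t, u, x, v, p, q | right; exists x, y, p]; by [].
Qed.

Definition inv2 (c : gconfig B2) : Prop :=
  let w := c.1.1 ++ c.2 in
  match c.1.2 with
  | Some true => count_mem false w = count_mem true w
  | Some false => count_mem false w = count_mem true w * 2
  | None => True
  end.

Lemma inv_back qf c : clos_refl_trans_1n _ (@gstep _ B2) c ([::], qf, [::]) -> inv2 c.
Proof.
move=> H; remember ([::], qf, [::]) as e eqn:Ee.
induction H as [c0|c0 d e' Hs Hr IH].
  by subst; rewrite /inv2 /=; case: qf => [[]|].
have := IH Ee; clear IH Hr; subst e'.
case: (gstep_inv Hs) => [[t [u [x [v [p [q [-> [-> Hr]]]]]]]]|[x [y [p [-> [-> _]]]]]].
  rewrite /inv2 /=.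
  case: p Hr => [[]|] // /gR2P [[-> [-> [|]]]|[-> [-> [|]]]] // _;
  rewrite !count_cat /=; lia.
by rewrite /inv2.
Qed.

Lemma count_W i j : count_mem true (W i j) = i /\ count_mem false (W i j) = j.
Proof. by rewrite !count_cat !count_nseq /=; lia. Qed.

Lemma acc_neg i j : gaccepts B2 (W i j) -> i = j \/ j = i * 2.
Proof.
rewrite /gaccepts; case=> qf Hf /clos_rt_rt1n_iff H.
case: (rt1n_inv H) => [E|[d Hs Hr]]; first by case: E Hf => <-.
have Hi := inv_back Hr.
have [Ci Cj] := count_W i j.
case: (gstep_inv Hs) => [[t [u [x [v [p [q [E [Ed Hg]]]]]]]]|[x [y [p [E [_ Hx]]]]]];
  last by case: E Hx => <-.
rewrite Ed in Hi; case: E Hi Hg => <- <- Ew Hi Hg.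
rewrite Ew in Ci Cj; move: Hi Ci Cj; rewrite /inv2 /=.
case/gR2P: Hg => [[-> [-> _]]|[-> [-> _]]]; rewrite !count_cat /=; lia.
Qed.

Lemma uniq_split (T : Type) (P : T -> bool) x a y x' a' y' :
  all (fun b => ~~ P b) x -> P a -> all (fun b => ~~ P b) x' -> P a' ->
  x ++ a :: y = x' ++ a' :: y' -> x = x' /\ a = a' /\ y = y'.
Proof.
elim: x x' => [|c x IH] [|d x'] //=.
- by move=> _ _ _ _ [-> ->].
- by move=> _ Pa /andP [Pd _] _ [E _]; move: Pd; rewrite -E Pa.
- by move=> /andP [Pc _] _ _ Pa' [E _]; move: Pc; rewrite E Pa'.
move=> /andP [_ Hx] Pa /andP [_ Hx'] Pa' [-> E].
by case: (IH x' Hx Pa Hx' Pa' E) => -> [-> ->].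
Qed.

Section Row.
Variable A : rowjfa bool.

Lemma rstep_det (c d1 d2 : rconfig A) : rstep c d1 -> rstep c d2 -> d1 = d2.
Proof.
case=> p q a x y Hd Hx H2; inversion H2 as [p' q' a' x' y' Hd' Hx' E1 E2].
have Pa : rSigma p a by rewrite /rSigma Hd.
have Pa' : rSigma p a' by rewrite /rSigma Hd'.
case: (uniq_split Hx Pa Hx' Pa' (esym H)) => Ex [Ea Ey]; subst.
by move: Hd; rewrite Hd' => [[->]].
Qed.

Lemma rstep_src (c d : rconfig A) : rstep c d -> c.2 != [::].
Proof. by case=> p q a x y _ _ /=; case: x. Qed.

Lemma rstep_rule (c d : rconfig A) : rstep c d -> exists a q, rdelta c.1 a = Some q.
Proof. by case=> p q a x y Hd _ /=; exists a, q. Qed.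

Definition racc (c : rconfig A) := exists2 qf, rF qf & clos_refl_trans _ (@rstep _ A) c (qf, [::]).

Lemma racc_path c c' : clos_refl_trans _ (@rstep _ A) c c' -> (racc c <-> racc c').
Proof.
move=> /clos_rt_rt1n_iff H; split; last first.
  case=> qf Hf H'; exists qf => //; apply: rt_trans H'; exact/clos_rt_rt1n_iff.
case=> qf Hf /clos_rt_rt1n_iff H'; exists qf => //; apply/clos_rt_rt1n_iff.
induction H as [|c1 c2 c3 Hs Hr IH]; first by [].
apply: IH; case: (rt1n_inv H') => [E|[d Hs' Hr']].
  by move: (rstep_src Hs); rewrite E.
by rewrite (rstep_det Hs Hs').
Qed.

Definition nextl (p : rQ A) (l : bool) := if rSigma p l then l else ~~ l.
Definition ctrl (s : rQ A * bool) : option (rQ A * bool) :=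
  let c := nextl s.1 s.2 in
  if rdelta s.1 c is Some q then Some (q, c) else None.
Definition gfun s := odflt s (ctrl s).
Definition st k := iter k gfun (rq0 A, true).
Fixpoint Acnt k := if k is k'.+1 then Acnt k' + (st k).2 else 0.
Fixpoint Bcnt k := if k is k'.+1 then Bcnt k' + ~~ (st k).2 else 0.
Definition cfg (l : bool) i j : seq bool :=
  if l then nseq i true ++ nseq j false else nseq j false ++ nseq i true.

Lemma one_step p l q c i j : 0 < i -> 0 < j -> ctrl (p, l) = Some (q, c) ->
  rstep (p, cfg l i j) (q, cfg c (i - c) (j - ~~ c)).
Proof.
case: i => // i _; case: j => // j _.
rewrite /ctrl /nextl /=.
case Hs: (rSigma p l); case E: (rdelta p _) => [q'|] // [<- <-].
- case: l Hs E => Hs E /=; rewrite ?subn0 ?subn1 /=.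
  + by have := @RStep _ A p q' true [::] (nseq i true ++ nseq j.+1 false) E isT; rewrite cats0.
  + by have := @RStep _ A p q' false [::] (nseq j false ++ nseq i.+1 true) E isT; rewrite cats0.
- case: l Hs E => Hs E /=; rewrite ?subn0 ?subn1 /=.
  + have := @RStep _ A p q' false (nseq i.+1 true) (nseq j false) E.
    by rewrite all_nseq Hs /=; apply.
  + have := @RStep _ A p q' true (nseq j.+1 false) (nseq i true) E.
    by rewrite all_nseq Hs /=; apply.
Qed.

Definition ok k := forall m, m < k -> ctrl (st m) <> None.

Lemma st_succ m : ctrl (st m) <> None -> ctrl (st m) = Some (st m.+1).
Proof. by rewrite /st iterS /gfun; case: (ctrl _). Qed.

Lemma A_le k : Acnt k <= k.
Proof. by elim: k => //= k IH; case: ((st k.+1).2) => /=; lia. Qed.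

Lemma B_le k : Bcnt k <= k.
Proof. by elim: k => //= k IH; case: ((st k.+1).2) => /=; lia. Qed.

Lemma AB k : Acnt k + Bcnt k = k.
Proof. by elim: k => //= k IH; case: ((st k.+1).2) => /=; lia. Qed.

Lemma A_mono k d : Acnt k <= Acnt (k + d).
Proof. by elim: d => [|d IH]; rewrite ?addn0 // addnS /=; lia. Qed.

Lemma B_mono k d : Bcnt k <= Bcnt (k + d).
Proof. by elim: d => [|d IH]; rewrite ?addn0 // addnS /=; lia. Qed.

Lemma sim k i j : ok k -> k < i -> k < j ->
  clos_refl_trans _ (@rstep _ A) (rq0 A, cfg true i j)
    ((st k).1, cfg (st k).2 (i - Acnt k) (j - Bcnt k)).
Proof.
elim: k => [|k IH] Hok Hi Hj.
  by rewrite /= !subn0; apply: rt_refl.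
apply: rt_trans (IH (fun m Hm => Hok m (ltnW Hm)) (ltnW Hi) (ltnW Hj)) _.
apply: rt_step.
have E := st_succ (Hok k (ltnSn k)).
have Ha := A_le k; have Hb := B_le k.
have := @one_step (st k).1 (st k).2 (st k.+1).1 (st k.+1).2 (i - Acnt k) (j - Bcnt k).
rewrite -!surjective_pairing /= !subnDA; apply => //; lia.
Qed.

End Row.

Lemma ok_or_stuck (A : rowjfa bool) k :
  ok A k \/ exists m, [/\ m < k, ok A m & ctrl (st A m) = None].
Proof.
elim: k => [|k [Hk|[m [Hm Hok Hc]]]].
- by left.
- case E: (ctrl (st A k)) => [s|].
    left => m; rewrite ltnS leq_eqVlt => /orP [/eqP ->|/Hk //]; by rewrite E.
  by right; exists k; split.
- by right; exists m; split => //; apply: ltnW.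
Qed.

Lemma not_rowj (A : rowjfa bool) :
  ~ (forall w, gaccepts B2 w <-> raccepts A w).
Proof.
move=> HA.
have HL : forall i j, 0 < i -> (i = j \/ j = i * 2) <-> racc (rq0 A, cfg true i j).
  move=> i j Hi; split.
    by move=> H; apply/HA; apply: acc_pos.
  by move=> H; apply: acc_neg; apply/HA.
pose N := #|{: rQ A * bool}|.
case: (ok_or_stuck A N.+1) => [Hok|[m [_ Hok Hc]]]; last first.
  have Hs := sim Hok (ltnSn m) (ltnSn m).
  have := (HL m.+1 m.+1 isT).1 (or_introl erefl).
  rewrite (racc_path Hs).
  case Es: (st A m) Hc => [p l] Hc.
  have Ha := A_le A m.
  case=> qf _ /clos_rt_rt1n_iff H.
  case: (rt1n_inv H) => [E|[d Hst _]].
    case: E => _ H'; have := congr1 size H'; case: (l); rewrite /= size_cat !size_nseq; lia.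
  case: (rstep_rule Hst) => a [q] /= Hd.
  move: Hc; rewrite /ctrl /nextl /=.
  case Hl: (rSigma p l).
    by move: Hl; rewrite /rSigma; case: (rdelta p l).
  case E2: (rdelta p (~~ l)) => [q'|] // _.
  have Hn : forall b, rdelta p b = None.
    move: Hl E2; rewrite /rSigma; case: (l) => /=;
    case Et: (rdelta p true); case Ef: (rdelta p false) => //= _ _ [] //.
  by rewrite Hn in Hd.
pose f := fun k : 'I_N.+1 => st A k.
have Hni : ~ injective f.
  move=> /leq_card; rewrite card_ord; rewrite ltnn //.
have [k1 [k2 [Hne Heq]]] : exists k1 k2 : 'I_N.+1, k1 <> k2 /\ f k1 = f k2.
  apply: Classical_Prop.NNPP => Hc; apply: Hni => x y Hxy.
  apply: Classical_Prop.NNPP => Hn; apply: Hc; by exists x, y.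
have [n1 [n2 [Hlt Hn2 Hst]]] : exists n1 n2, [/\ n1 < n2, n2 <= N & st A n1 = st A n2].
  have H1 := ltn_ord k1; have H2 := ltn_ord k2.
  case: (ltngtP k1 k2) => [H|H|H].
  - by exists k1, k2; split.
  - by exists k2, k1; split.
  - by exfalso; apply: Hne; apply: val_inj.
pose al := Acnt A n2 - Acnt A n1.
pose be := Bcnt A n2 - Bcnt A n1.
have Hab : 0 < al + be.
  have := AB A n1; have := AB A n2; have := A_mono A n1 (n2 - n1);
  have := B_mono A n1 (n2 - n1); rewrite subnKC ?(ltnW Hlt) //; rewrite /al /be; lia.
have Hshift : forall i j, N < i -> N < j ->
    (racc (rq0 A, cfg true (i + al) (j + be)) <-> racc (rq0 A, cfg true i j)).
  move=> i j Hi Hj.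
  have Hok1 : ok A n1 by move=> m Hm; apply: Hok; lia.
  have Hok2 : ok A n2 by move=> m Hm; apply: Hok; lia.
  rewrite (racc_path (sim Hok2 (_ : n2 < i + al) (_ : n2 < j + be))); try lia.
  rewrite (racc_path (sim Hok1 (_ : n1 < i) (_ : n1 < j))); try lia.
  have := A_mono A n1 (n2 - n1); have := B_mono A n1 (n2 - n1).
  rewrite subnKC ?(ltnW Hlt) // => Hb Ha.
  have -> : i + al - Acnt A n2 = i - Acnt A n1.
    have := A_le A n1; rewrite /al; lia.
  have -> : j + be - Bcnt A n2 = j - Bcnt A n1.
    have := B_le A n1; rewrite /be; lia.
  by rewrite Hst.
pose M := N + al + be + 1.
have HM : 0 < M by rewrite /M addn1.
have HM1 : 0 < M + al by rewrite /M; lia.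
have HMN : N < M by rewrite /M; lia.
have HMN2 : N < M * 2 by rewrite /M; lia.
have H1 := (HL M M HM).1 (or_introl erefl).
have H2 := (HL M (M * 2) HM).1 (or_intror erefl).
have := (HL (M + al) (M + be) HM1).2 ((Hshift M M HMN HMN).2 H1).
have := (HL (M + al) (M * 2 + be) HM1).2 ((Hshift M (M * 2) HMN HMN2).2 H2).
rewrite /M; lia.
Qed.


Theorem lemma1 :
  (forall (S : finType) (L : language S), ROWJ L -> GRLOWJ L) /\
  (exists (S : finType) (L : language S), GRLOWJ L /\ ~ ROWJ L).
Proof.
split; first exact: part1.
exists bool, (gaccepts B2); split; first by exists B2.
by case=> A HA; apply: (not_rowj HA).
Qed.
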